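(* Let $(X,d)$ be a path-connected metric space, $x_0\in X$, $n\geq1$. Then the Spanier topology on $\pi_n(X,x_0)$ is at least as fine as the topology induced by the pseudometric $\rho$.
   Context: Identify $n$-loops with based maps $(S^n,d_0)\to(X,x_0)$, uniform metric $\mu(\alpha,\beta)=\sup_t d(\alpha(t),\beta(t))$; $\rho(a,b)=\inf\{\mu(\alpha,\beta)\mid\alpha\in a,\beta\in b\}$. $\mathrm{cov}(X)$ is the set of pairs $(\mathscr{U},U_0)$ with $\mathscr{U}$ a locally finite open cover of $X$ and $U_0\in\mathscr{U}$ containing $x_0$. The Spanier group $\mathrm{Span}_n(\mathscr{U},x_0)$ is the (normal) subgroup of $\pi_n(X,x_0)$ generated by the classes $[\gamma\ast f]$, $\gamma$ a path from $x_0$, $f:(S^n,d_0)\to(X,\gamma(1))$ with image in some element of $\mathscr{U}$, and $\gamma\ast f$ the path-conjugate of $f$ by $\gamma$ (representing the image of $[f]$ under change of basepoint along $\gamma$). The Spanier topology on $\pi_n(X,x_0)$ is the topology with basis the cosets $g\,\mathrm{Span}_n(\mathscr{U},x_0)$, $g\in\pi_n(X,x_0)$, $(\mathscr{U},U_0)\in\mathrm{cov}(X)$. *)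

(* Defs.v *)
From HB Require Import structures.
From mathcomp Require Import all_boot all_order all_algebra.
From mathcomp Require Import all_classical all_reals.
From mathcomp Require Import Rstruct.
Set Implicit Arguments. Unset Strict Implicit. Unset Printing Implicit Defensive.
Import Order.TTheory GRing.Theory Num.Theory.
Local Open Scope classical_set_scope.
Local Open Scope ring_scope.

Notation RR := Rdefinitions.R.

Section Spanier.
Variables (X : Type) (d : X -> X -> RR) (x0 : X) (n : nat).

Definition is_metric : Prop :=
  [/\ forall x y, 0 <= d x y, forall x y, d x y = 0 <-> x = y,
      forall x y, d x y = d y x & forall x y z, d x z <= d x y + d y z].

Definition d_open (A : set X) : Prop :=
  forall x, A x -> exists2 e : RR, 0 < e & forall y, d x y < e -> A y.

Definition unit_int (s : RR) : Prop := 0 <= s <= 1.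
Definition cube (t : 'I_n -> RR) : Prop := forall i, unit_int (t i).
Definition cube_bdry (t : 'I_n -> RR) : Prop :=
  cube t /\ exists i, t i = 0 \/ t i = 1.

Definition path_cont (g : RR -> X) : Prop :=
  forall s, unit_int s -> forall e : RR, 0 < e -> exists2 del : RR, 0 < del &
    forall s', unit_int s' -> `|s - s'| < del -> d (g s) (g s') < e.

Definition is_path (g : RR -> X) (a b : X) : Prop :=
  path_cont g /\ g 0 = a /\ g 1 = b.

Definition path_connected : Prop := forall a b, exists g, is_path g a b.

Definition cube_cont (f : ('I_n -> RR) -> X) : Prop :=
  forall t, cube t -> forall e : RR, 0 < e -> exists2 del : RR, 0 < del &
    forall t', cube t' -> (forall i, `|t i - t' i| < del) -> d (f t) (f t') < e.

(** based maps (I^n, bdry I^n) -> (X, y); these are the based maps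
    (S^n, d_0) -> (X, y) via S^n = I^n / bdry I^n *)
Definition based_map (y : X) (f : ('I_n -> RR) -> X) : Prop :=
  cube_cont f /\ forall t, cube_bdry t -> f t = y.

Definition is_loop := based_map x0.

Definition homotopic (a b : ('I_n -> RR) -> X) : Prop :=
  is_loop a /\ is_loop b /\
  exists H : ('I_n -> RR) -> RR -> X,
    [/\ forall t s, cube t -> unit_int s -> forall e : RR, 0 < e ->
          exists2 del : RR, 0 < del & forall t' s', cube t' -> unit_int s' ->
            (forall i, `|t i - t' i| < del) -> `|s - s'| < del ->
            d (H t s) (H t' s') < e,
        forall t, cube t -> H t 0 = a t,
        forall t, cube t -> H t 1 = b t &
        forall t s, cube_bdry t -> unit_int s -> H t s = x0].

(** homotopy classes: elements of pi_n(X, x0) are represented as the sets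
    of loops homotopic to a given loop *)
Definition hclass (a : ('I_n -> RR) -> X) : set (('I_n -> RR) -> X) :=
  [set b | homotopic a b].

Definition is_class (c : set (('I_n -> RR) -> X)) : Prop :=
  exists2 a, is_loop a & c = hclass a.

Definition first_coord : option 'I_n := [pick i : 'I_n | val i == 0%N].

Definition setc (t : 'I_n -> RR) (i : 'I_n) (v : RR) : 'I_n -> RR :=
  fun j => if j == i then v else t j.

Definition concat (a b : ('I_n -> RR) -> X) : ('I_n -> RR) -> X :=
  fun t => match first_coord with
  | Some i => if t i <= 2^-1 then a (setc t i (2 * t i))
              else b (setc t i (2 * t i - 1))
  | None => a t
  end.

Definition rev_loop (a : ('I_n -> RR) -> X) : ('I_n -> RR) -> X :=
  fun t => match first_coord with
  | Some i => a (setc t i (1 - t i))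
  | None => a t
  end.

Definition const_loop : ('I_n -> RR) -> X := fun _ => x0.

Definition mulc (p q : set (('I_n -> RR) -> X)) : set (('I_n -> RR) -> X) :=
  [set c | exists a b, [/\ p a, q b & homotopic (concat a b) c]].
Definition invc (p : set (('I_n -> RR) -> X)) : set (('I_n -> RR) -> X) :=
  [set c | exists a, p a /\ homotopic (rev_loop a) c].
Definition onec : set (('I_n -> RR) -> X) := hclass const_loop.

(** path-conjugate gamma * f of a based map f at gamma(1):
    f shrunk to the inner cube [1/4,3/4]^n, gamma along the radial segments *)
Definition cdist (t : 'I_n -> RR) : RR := \big[Num.max/0]_i `|t i - 2^-1|.

Definition pathconj (g : RR -> X) (f : ('I_n -> RR) -> X) : ('I_n -> RR) -> X :=
  fun t => if cdist t <= 4^-1 then f (fun i => 2 * t i - 2^-1)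
           else g (2 - 4 * cdist t).

Definition cov (U : set (set X)) (U0 : set X) : Prop :=
  [/\ forall A, U A -> d_open A,
      forall x, exists2 A, U A & A x,
      forall x, exists2 W, d_open W /\ W x &
        finite_set [set A | U A /\ (A `&` W) !=set0] &
      U U0 /\ U0 x0].

Definition span_gens (U : set (set X)) : set (set (('I_n -> RR) -> X)) :=
  [set c | exists g f A, [/\ is_path g x0 (g 1), based_map (g 1) f, U A,
     (forall t, cube t -> A (f t)) & c = hclass (pathconj g f)]].

Definition subgroup (S : set (set (('I_n -> RR) -> X))) : Prop :=
  [/\ S onec, forall p q, S p -> S q -> S (mulc p q) &
      forall p, S p -> S (invc p)].

Definition Span (U : set (set X)) : set (set (('I_n -> RR) -> X)) :=
  [set c | forall S, span_gens U `<=` S -> subgroup S -> S c].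

Definition coset (g : set (('I_n -> RR) -> X)) (S : set (set (('I_n -> RR) -> X))) :=
  [set c | exists2 s, S s & c = mulc g s].

Definition spanier_open (O : set (set (('I_n -> RR) -> X))) : Prop :=
  forall c, O c -> exists U U0 g,
    [/\ cov U U0, is_class g, coset g (Span U) c & coset g (Span U) `<=` O].

Definition mu (a b : ('I_n -> RR) -> X) : RR :=
  sup [set d (a t) (b t) | t in cube].

Definition rho (p q : set (('I_n -> RR) -> X)) : RR :=
  inf [set mu a b | a in p & b in q].

Definition rho_open (O : set (set (('I_n -> RR) -> X))) : Prop :=
  forall c, O c -> exists2 e : RR, 0 < e &
    forall c', is_class c' -> rho c c' < e -> O c'.

End Spanier.

(* Main.v *)
Require Import Defs.
From mathcomp Require Import all_boot all_order all_algebra.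
From mathcomp Require Import all_classical all_reals wochoice.
From mathcomp Require Import Rstruct lra ring.
Set Implicit Arguments. Unset Strict Implicit. Unset Printing Implicit Defensive.
Import Order.TTheory GRing.Theory Num.Theory.
Local Open Scope classical_set_scope.
Local Open Scope ring_scope.

Section Cont.
Variable n : nat.
Local Notation T := ('I_n -> RR).

Definition Dm (t : T) (s : RR) := cube t /\ unit_int s.
Definition close (del : RR) (t : T) (s : RR) (t' : T) (s' : RR) :=
  (forall i, `|t i - t' i| < del) /\ `|s - s'| < del.
Definition rcont (f : T -> RR -> RR) := forall t s, Dm t s -> forall e : RR, 0 < e ->
  exists2 del : RR, 0 < del & forall t' s', Dm t' s' -> close del t s t' s' ->
  `|f t s - f t' s'| < e.
Definition ccont (f : T -> RR -> T) := forall t s, Dm t s -> forall e : RR, 0 < e ->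
  exists2 del : RR, 0 < del & forall t' s', Dm t' s' -> close del t s t' s' ->
  forall j, `|f t s j - f t' s' j| < e.

Lemma close_min del1 del2 t s t' s' : close (Num.min del1 del2) t s t' s' ->
  close del1 t s t' s' /\ close del2 t s t' s'.
Proof.
case=> h1 h2; move: h2; rewrite lt_min => /andP[h2 h3].
by split; split=> // i; have := h1 i; rewrite lt_min => /andP[].
Qed.

Lemma min_gt0 (a b : RR) : 0 < a -> 0 < b -> 0 < Num.min a b.
Proof. by move=> ha hb; rewrite lt_min ha hb. Qed.

Lemma rcont_coord i : rcont (fun t _ => t i).
Proof. move=> t s _ e he; exists e => // t' s' _ [h _]; exact: h. Qed.

Lemma rcont_s : rcont (fun _ s => s).
Proof. move=> t s _ e he; exists e => // t' s' _ [_ h]; exact: h. Qed.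

Lemma rcont_cst c : rcont (fun _ _ => c).
Proof. move=> t s _ e he; exists 1 => // t' s' _ _; by rewrite subrr normr0. Qed.

Lemma rcont_lin f a b : rcont f -> rcont (fun t s => a * f t s + b).
Proof.
move=> hf t s D e he.
have ha : 0 < `|a| + 1 by have := normr_ge0 a; lra.
have [del hdel H] := hf t s D (e / (`|a| + 1)) (divr_gt0 he ha).
exists del => // t' s' D' C.
have := H t' s' D' C => h.
rewrite opprD addrACA subrr addr0 -mulrBr normrM.
have h0 : `|f t s - f t' s'| * (`|a| + 1) < e.
  by rewrite -(ltr_pdivlMr _ _ ha).
have := normr_ge0 (f t s - f t' s'); have := normr_ge0 a; nra.
Qed.

Lemma rcont_add f g : rcont f -> rcont g -> rcont (fun t s => f t s + g t s).
Proof.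
move=> hf hg t s D e he.
have he2 : 0 < e / 2 by lra.
have [d1 hd1 H1] := hf t s D _ he2; have [d2 hd2 H2] := hg t s D _ he2.
exists (Num.min d1 d2); first exact: min_gt0.
move=> t' s' D' /close_min [C1 C2].
have := H1 t' s' D' C1; have := H2 t' s' D' C2.
move=> /ltr_normlP [a1 a2] /ltr_normlP [b1 b2]; apply/ltr_normlP; split; lra.
Qed.

Lemma rcont_mul f g : rcont f -> rcont g -> rcont (fun t s => f t s * g t s).
Proof.
move=> hf hg t s D e he.
set F := `|f t s| + 1; set G := `|g t s| + 1.
have hF : 0 < F by rewrite /F; have := normr_ge0 (f t s); lra.
have hG : 0 < G by rewrite /G; have := normr_ge0 (g t s); lra.
have e1 : 0 < e / (4 * G) by apply: divr_gt0 => //; lra.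
have e2 : 0 < Num.min 1 (e / (4 * F)) by apply: min_gt0; [lra| apply: divr_gt0 => //; lra].
have [d1 hd1 H1] := hf t s D _ e1; have [d2 hd2 H2] := hg t s D _ e2.
exists (Num.min d1 d2); first exact: min_gt0.
move=> t' s' D' /close_min [C1 C2].
have := H1 t' s' D' C1; have := H2 t' s' D' C2.
rewrite lt_min => /andP [g1 g2] f1.
have -> : f t s * g t s - f t' s' * g t' s' =
   f t s * (g t s - g t' s') + (f t s - f t' s') * g t' s' by ring.
have k1 : `|f t s * (g t s - g t' s')| < e / 2.
  rewrite normrM.
  have : `|g t s - g t' s'| * (4 * F) < e by rewrite -ltr_pdivlMr //; lra.
  rewrite /F; have := normr_ge0 (f t s); have := normr_ge0 (g t s - g t' s'); nra.
have k2 : `|(f t s - f t' s') * g t' s'| < e / 2.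
  rewrite normrM.
  have hg' : `|g t' s'| <= G.
    rewrite /G; have := ler_distD (g t s) (g t' s') 0.
    rewrite !subr0 [`|g t' s' - g t s|]distrC => hh.
    have : `|g t s| <= `|g t s - g t' s'| + `|g t' s'|.
      by have := ler_normD (g t s - g t' s') (g t' s'); rewrite subrK.
    move: g1; have := ler_normD (g t' s' - g t s) (g t s); rewrite subrK distrC.
    lra.
  have : `|f t s - f t' s'| * (4 * G) < e by rewrite -ltr_pdivlMr //; lra.
  have := normr_ge0 (f t s - f t' s'); have := normr_ge0 (g t' s'); nra.
have := ler_normD (f t s * (g t s - g t' s')) ((f t s - f t' s') * g t' s').
lra.
Qed.

Definition clamp (x : RR) : RR := Num.min 1 (Num.max 0 x).

Lemma clamp_int x : unit_int (clamp x).
Proof.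
rewrite /unit_int /clamp; apply/andP; split.
  by rewrite le_min ler01 le_max lexx.
by rewrite ge_min lexx.
Qed.

Lemma clamp_id x : unit_int x -> clamp x = x.
Proof.
move=> /andP[h0 h1]; rewrite /clamp.
by rewrite (max_idPr h0) (min_idPr h1).
Qed.

Lemma absP (a b : RR) : -b <= a -> a <= b -> `|a| <= b.
Proof. by move=> h1 h2; apply/ler_normlP; split => //; lra. Qed.
Lemma abs_ge (a : RR) : a <= `|a| /\ - a <= `|a|.
Proof. by split; [exact: ler_norm | rewrite -normrN; exact: ler_norm]. Qed.
Lemma clamp_lip x y : `|clamp x - clamp y| <= `|x - y|.
Proof.
have [h1 h2] := abs_ge (x - y).
rewrite /clamp /Order.min /Order.max; apply: absP;
repeat case: ifP => /=; move=> *; lra.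
Qed.

Lemma rcont_clamp f : rcont f -> rcont (fun t s => clamp (f t s)).
Proof.
move=> hf t s D e he; have [del hd H] := hf t s D e he; exists del => // t' s' D' C.
exact: le_lt_trans (clamp_lip _ _) (H _ _ D' C).
Qed.

Lemma cdist_ge0 (t : T) : 0 <= cdist t.
Proof. by rewrite /cdist; elim/big_ind: _ => // x y hx hy; rewrite le_max hx. Qed.

Lemma cdist_ge i (t : T) : `|t i - 2^-1| <= cdist t.
Proof. exact: (le_bigmax 0 (fun i => `|t i - 2^-1|) i). Qed.

Lemma cdist_lt (t : T) c : 0 < c -> (forall i, `|t i - 2^-1| < c) -> cdist t < c.
Proof. by move=> hc h; rewrite /cdist; apply: bigmax_lt. Qed.

Lemma cdist_le (t : T) c : 0 <= c -> (forall i, `|t i - 2^-1| <= c) -> cdist t <= c.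
Proof. by move=> hc h; rewrite /cdist; apply: bigmax_le. Qed.

Lemma cdist_lip (t t' : T) e : 0 < e -> (forall i, `|t i - t' i| < e) ->
  cdist t < cdist t' + e.
Proof.
move=> he h; apply: cdist_lt; first by have := cdist_ge0 t'; lra.
move=> i; have := cdist_ge i t'; have := h i.
have := ler_normD (t i - t' i) (t' i - 2^-1).
rewrite addrA subrK; lra.
Qed.

Lemma rcont_cdist : rcont (fun t _ => cdist t).
Proof.
move=> t s _ e he; exists e => // t' s' _ [C _].
have h1 := cdist_lip he C.
have h2 : cdist t' < cdist t + e.
  by apply: cdist_lip => // i; rewrite distrC.
by apply/ltr_normlP; split; lra.
Qed.

Lemma ccont_setc (i : 'I_n) v : rcont v -> ccont (fun t s => setc t i (v t s)).
Proof.
move=> hv t s D e he; have [del hd H] := hv t s D e he.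
exists (Num.min del e); first exact: min_gt0.
move=> t' s' D' /close_min [C1 [C2 _]] j; rewrite /setc.
by case: eqP => _; [exact: H | exact: C2].
Qed.

Lemma ccont_pw (f : RR -> RR) (K : RR) : 0 < K ->
  (forall x y, `|f x - f y| <= K * `|x - y|) -> ccont (fun t _ j => f (t j)).
Proof.
move=> hK hf t s D e he; exists (e / K); first exact: divr_gt0.
move=> t' s' _ [C _] j; apply: le_lt_trans (hf _ _) _.
by rewrite mulrC -ltr_pdivlMr.
Qed.

End Cont.

Section HC.
Variables (X : Type) (d : X -> X -> RR) (x0 : X) (n : nat).
Hypothesis hm : is_metric d.
Local Notation T := ('I_n -> RR).

Definition hcont (H : T -> RR -> X) := forall t s, Dm t s -> forall e : RR, 0 < e ->
  exists2 del : RR, 0 < del & forall t' s', Dm t' s' -> close del t s t' s' ->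
  d (H t s) (H t' s') < e.

Lemma hcont_ext F G : (forall t s, Dm t s -> F t s = G t s) -> hcont G -> hcont F.
Proof.
move=> E hG t s D e he; have [del hd H] := hG t s D e he; exists del => // t' s' D' C.
by rewrite !E //; apply: H.
Qed.

Lemma hcont_comp H (phi : T -> RR -> T) sig : hcont H -> ccont phi -> rcont sig ->
  (forall t s, Dm t s -> Dm (phi t s) (sig t s)) ->
  hcont (fun t s => H (phi t s) (sig t s)).
Proof.
move=> hH hp hs hD t s D e he.
have [del hd K] := hH _ _ (hD _ _ D) e he.
have [d1 hd1 K1] := hp t s D del hd; have [d2 hd2 K2] := hs t s D del hd.
exists (Num.min d1 d2); first exact: min_gt0.
move=> t' s' D' /close_min [C1 C2]; apply: K; first exact: hD.
by split; [exact: K1 | exact: K2].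
Qed.

Lemma hcont_loop a : cube_cont d a -> hcont (fun t _ => a t).
Proof.
move=> ha t s [ct _] e he; have [del hd K] := ha t ct e he.
by exists del => // t' s' [ct' _] [C _]; apply: K.
Qed.

Lemma hcont_path g sig : path_cont d g -> rcont sig ->
  (forall t s, Dm t s -> unit_int (sig t s)) -> hcont (fun t s => g (sig t s)).
Proof.
move=> hg hs hD t s D e he; have [del hd K] := hg _ (hD _ _ D) e he.
have [d1 hd1 K1] := hs t s D del hd.
by exists d1 => // t' s' D' C; apply: K; [exact: hD | exact: K1].
Qed.

Lemma hcont_paste F1 F2 th c : hcont F1 -> hcont F2 -> rcont th ->
  (forall t s, Dm t s -> th t s = c -> F1 t s = F2 t s) ->
  hcont (fun t s => if th t s <= c then F1 t s else F2 t s).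
Proof.
move=> h1 h2 hth E t s D e he /=.
have [d1 hd1 K1] := h1 t s D e he; have [d2 hd2 K2] := h2 t s D e he.
case: (ltrgtP (th t s) c) => [lt|gt|eq].
- have hc : 0 < c - th t s by rewrite subr_gt0.
  have [d3 hd3 K3] := hth t s D (c - th t s) hc.
  exists (Num.min d1 d3); first exact: min_gt0.
  move=> t' s' D' /close_min [C1 C3].
  have := K3 _ _ D' C3 => /ltr_normlP [k1 k2].
  have -> : th t' s' <= c by apply/ltW; lra.
  by apply: K1.
- have hc : 0 < th t s - c by rewrite subr_gt0.
  have [d3 hd3 K3] := hth t s D (th t s - c) hc.
  exists (Num.min d2 d3); first exact: min_gt0.
  move=> t' s' D' /close_min [C1 C3].
  have := K3 _ _ D' C3 => /ltr_normlP [k1 k2].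
  have -> : th t' s' <= c = false by apply/negbTE; rewrite -ltNge; lra.
  by apply: K2.
- exists (Num.min d1 d2); first exact: min_gt0.
  move=> t' s' D' /close_min [C1 C2].
  case: ifP => _; first exact: K1.
  by rewrite E //; apply: K2.
Qed.

End HC.

Section Hom.
Variables (X : Type) (d : X -> X -> RR) (x0 : X) (n : nat).
Hypothesis hm : is_metric d.
Local Notation T := ('I_n -> RR).
Local Notation hcont := (hcont d).
Local Notation homotopic := (homotopic d x0).

Definition hbdry (H : T -> RR -> X) :=
  forall t s, cube_bdry t -> unit_int s -> H t s = x0.

Lemma bdry_cube (t : T) : cube_bdry t -> cube t.
Proof. by case. Qed.

Lemma cube_cont_of (F : T -> X) : hcont (fun t _ => F t) -> cube_cont d F.
Proof.
move=> h t ct e he.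
have D : Dm t 0 by split => //; rewrite /unit_int lexx ler01.
have [del hd K] := h t 0 D e he; exists del => // t' ct' C.
apply: (K t' 0); first by split => //; rewrite /unit_int lexx ler01.
by split => //; rewrite subrr normr0.
Qed.

Lemma mk_hom (a b : T -> X) (H : T -> RR -> X) : hcont H -> hbdry H -> (forall t, cube t -> H t 0 = a t) ->
  (forall t, cube t -> H t 1 = b t) -> homotopic a b.
Proof.
move=> hH hB h0 h1.
have u0 : unit_int 0 by rewrite /unit_int lexx ler01.
have u1 : unit_int 1 by rewrite /unit_int lexx ler01.
have la : is_loop d x0 a.
  split.
    apply: cube_cont_of; apply: (hcont_ext (G := fun t _ => H t 0)).
      by move=> t s [ct _]; rewrite h0.
    apply: (hcont_comp (phi := fun t _ => t) (sig := fun _ _ => 0)) => //.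
    - by apply: (ccont_pw (f := id) (K := 1)) => // x y; rewrite mul1r.
    - exact: rcont_cst.
    - by move=> t s [ct _].
  by move=> t bt; rewrite -h0 ?hB //; case: bt.
have lb : is_loop d x0 b.
  split.
    apply: cube_cont_of; apply: (hcont_ext (G := fun t _ => H t 1)).
      by move=> t s [ct _]; rewrite h1.
    apply: (hcont_comp (phi := fun t _ => t) (sig := fun _ _ => 1)) => //.
    - by apply: (ccont_pw (f := id) (K := 1)) => // x y; rewrite mul1r.
    - exact: rcont_cst.
    - by move=> t s [ct _].
  by move=> t bt; rewrite -h1 ?hB //; case: bt.
split => //; split => //; exists H; split => //.
move=> t s ct us e he; have [del hd K] := hH t s (conj ct us) e he.
by exists del => // t' s' ct' us' C1 C2; apply: K.
Qed.

Lemma hom_data (a b : T -> X) : homotopic a b -> exists H, [/\ hcont H, hbdry H,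
  (forall t, cube t -> H t 0 = a t) & (forall t, cube t -> H t 1 = b t)].
Proof.
case=> _ [_ [H [hc h0 h1 hb]]]; exists H; split => //.
move=> t s [ct us] e he; have [del hd K] := hc t s ct us e he.
by exists del => // t' s' [ct' us'] [C1 C2]; apply: K.
Qed.

Lemma loop_hcont (a : T -> X) : is_loop d x0 a -> hcont (fun t _ => a t).
Proof. by case=> h _; apply: hcont_loop. Qed.

Lemma hom_refl (a : T -> X) : is_loop d x0 a -> homotopic a a.
Proof.
move=> la; apply: (mk_hom (H := fun t _ => a t)) => //; first exact: loop_hcont.
by move=> t s bt _; case: la => _ ->.
Qed.

Lemma hom_loops (a b : T -> X) : homotopic a b -> is_loop d x0 a /\ is_loop d x0 b.
Proof. by case=> ? []. Qed.

Lemma ccont_id : ccont (fun (t : T) (_ : RR) => t).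
Proof. by apply: (ccont_pw (f := id) (K := 1)) => // x y; rewrite mul1r. Qed.

Lemma hom_sym (a b : T -> X) : homotopic a b -> homotopic b a.
Proof.
move=> /hom_data [H [hc hb h0 h1]].
apply: (mk_hom (H := fun t s => H t (-1 * s + 1))).
- apply: (hcont_comp (phi := fun t _ => t)) => //; first exact: ccont_id.
    exact: rcont_lin (@rcont_s _).
  by move=> t s [ct /andP [u1 u2]]; split => //; apply/andP; split; lra.
- by move=> t s bt /andP [u1 u2]; apply: hb => //; apply/andP; split; lra.
- by move=> t ct; rewrite mulr0 add0r h1.
- by move=> t ct; rewrite mulN1r addNr h0.
Qed.

Lemma hom_trans (a b c : T -> X) : homotopic a b -> homotopic b c -> homotopic a c.
Proof.
move=> /hom_data [H1 [hc1 hb1 h10 h11]] /hom_data [H2 [hc2 hb2 h20 h21]].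
have u2 : forall s, unit_int (clamp s) by move=> s; exact: clamp_int.
apply: (mk_hom (H := fun t s => if s <= 2^-1 then H1 t (clamp (2 * s + 0))
   else H2 t (clamp (2 * s + -1)))).
- apply: (hcont_paste (th := fun _ s => s)).
  + apply: (hcont_comp (phi := fun t _ => t)) => //; first exact: ccont_id.
      exact: rcont_clamp (rcont_lin _ _ (@rcont_s _)).
    by move=> t s [ct _]; split.
  + apply: (hcont_comp (phi := fun t _ => t)) => //; first exact: ccont_id.
      exact: rcont_clamp (rcont_lin _ _ (@rcont_s _)).
    by move=> t s [ct _]; split.
  + exact: rcont_s.
  move=> t s [ct _] ->.
  have -> : 2 * 2^-1 + 0 = 1 :> RR by field.
  have -> : 2 * 2^-1 + -1 = 0 :> RR by field.
  rewrite !clamp_id ?h11 ?h20 //; rewrite /unit_int lexx ler01 //.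
- by move=> t s bt us; case: ifP => _; [exact: hb1 | exact: hb2].
- move=> t ct; have -> : (0 : RR) <= 2^-1 by rewrite invr_ge0 ler0n.
  by rewrite mulr0 addr0 clamp_id ?h10 // /unit_int lexx ler01.
- move=> t ct; have -> : ((1 : RR) <= 2^-1) = false.
    by apply/negbTE; rewrite -ltNge; lra.
  have -> : 2 * 1 + -1 = 1 :> RR by ring.
  by rewrite clamp_id ?h21 // /unit_int lexx ler01.
Qed.

End Hom.

Section Concat.
Variables (X : Type) (d : X -> X -> RR) (x0 : X) (n : nat).
Local Notation T := ('I_n -> RR).
Local Notation hcont := (hcont d).
Local Notation homotopic := (homotopic d x0).
Local Notation hbdry := (hbdry x0).
Variables (i : 'I_n) (hi : first_coord n = Some i).

Lemma unit_int01 : unit_int 0 /\ unit_int 1.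
Proof. by split; apply/andP; split; rewrite ?lexx ?ler01. Qed.

Lemma cube_setc (t : T) v : cube t -> unit_int v -> cube (setc t i v).
Proof. by move=> ct uv j; rewrite /setc; case: eqP. Qed.

Lemma bdry_setc (t : T) v : cube_bdry t -> unit_int v ->
  (t i = 0 -> v = 0 \/ v = 1) -> (t i = 1 -> v = 0 \/ v = 1) ->
  cube_bdry (setc t i v).
Proof.
move=> [ct [j hj]] uv h0 h1; split; first exact: cube_setc.
exists j; rewrite /setc; case: eqP => [E|//]; rewrite E in hj.
by case: hj => hj; [apply: h0 | apply: h1].
Qed.

Lemma bdry_setc01 (t : T) v : cube t -> (v = 0 \/ v = 1) -> cube_bdry (setc t i v).
Proof.
move=> ct hv; split.
  by apply: cube_setc => //; case: hv => ->; case: unit_int01.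
by exists i; rewrite /setc eqxx.
Qed.

Lemma setc_id (t : T) : setc t i (t i) = t.
Proof. by apply: funext => j; rewrite /setc; case: eqP => [->|]. Qed.

Lemma concatE (a b : T -> X) t : concat a b t =
  if t i <= 2^-1 then a (setc t i (2 * t i)) else b (setc t i (2 * t i - 1)).
Proof. by rewrite /concat hi. Qed.

Lemma revE (a : T -> X) t : rev_loop a t = a (setc t i (1 - t i)).
Proof. by rewrite /rev_loop hi. Qed.

Lemma hcont_concat (H1 H2 : T -> RR -> X) : hcont H1 -> hcont H2 -> hbdry H1 -> hbdry H2 ->
  hcont (fun t s => concat (fun u => H1 u s) (fun u => H2 u s) t).
Proof.
move=> c1 c2 b1 b2.
apply: (hcont_ext (G := fun t s => if t i <= 2^-1
   then H1 (setc t i (clamp (2 * t i + 0))) s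
   else H2 (setc t i (clamp (2 * t i + -1))) s)).
  move=> t s [ct _]; rewrite concatE; have /andP [u1 u2] := ct i.
  case: ifP => h.
    by rewrite addr0 clamp_id //; apply/andP; split; lra.
  move/negbT: h; rewrite -ltNge => h.
  by rewrite clamp_id //; apply/andP; split; lra.
apply: (hcont_paste (th := fun t _ => t i)).
- apply: (hcont_comp (sig := fun _ s => s)) => //.
  + exact: ccont_setc (rcont_clamp (rcont_lin _ _ (rcont_coord i))).
  + exact: rcont_s.
  + by move=> t s [ct us]; split => //; apply: cube_setc => //; apply: clamp_int.
- apply: (hcont_comp (sig := fun _ s => s)) => //.
  + exact: ccont_setc (rcont_clamp (rcont_lin _ _ (rcont_coord i))).
  + exact: rcont_s.
  + by move=> t s [ct us]; split => //; apply: cube_setc => //; apply: clamp_int.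
- exact: rcont_coord.
move=> t s [ct us] ->.
have -> : 2 * 2^-1 + 0 = 1 :> RR by field.
have -> : 2 * 2^-1 + -1 = 0 :> RR by field.
have [u0 u1] := unit_int01.
rewrite !clamp_id // b1 ?b2 //; apply: bdry_setc01 => //; by [right|left].
Qed.

Lemma hbdry_concat (H1 H2 : T -> RR -> X) : hbdry H1 -> hbdry H2 ->
  hbdry (fun t s => concat (fun u => H1 u s) (fun u => H2 u s) t).
Proof.
move=> b1 b2 t s bt us; rewrite concatE; have /andP [u1 u2] := (bdry_cube bt) i.
case: ifP => h.
  apply: b1 => //; apply: bdry_setc => //; first (apply/andP; split; lra).
    by move=> ->; left; rewrite mulr0.
  by move=> h1; move: h; rewrite h1; lra.
move/negbT: h; rewrite -ltNge => h.
apply: b2 => //; apply: bdry_setc => //; first (apply/andP; split; lra).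
  by move=> h1; move: h; rewrite h1; lra.
by move=> ->; right; rewrite mulr1; lra.
Qed.

Lemma concat_ext (a a' b b' : T -> X) t :
  (forall u, cube u -> a u = a' u) -> (forall u, cube u -> b u = b' u) ->
  cube t -> concat a b t = concat a' b' t.
Proof.
move=> ha hb ct; rewrite !concatE; have /andP [u1 u2] := ct i.
case: ifP => h.
  by rewrite ha //; apply: cube_setc => //; apply/andP; split; lra.
move/negbT: h; rewrite -ltNge => h.
by rewrite hb //; apply: cube_setc => //; apply/andP; split; lra.
Qed.

Lemma loop_concat (a b : T -> X) : is_loop d x0 a -> is_loop d x0 b ->
  is_loop d x0 (concat a b).
Proof.
move=> la lb; have ha := loop_hcont la; have hb := loop_hcont lb.
have ba : hbdry (fun t _ => a t) by move=> t s bt _; case: la => _ ->.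
have bb : hbdry (fun t _ => b t) by move=> t s bt _; case: lb => _ ->.
split.
  by apply: cube_cont_of; exact: (hcont_concat ha hb ba bb).
move=> t bt; have [u0 _] := unit_int01.
exact: (hbdry_concat ba bb bt u0).
Qed.

Lemma hom_concat (a a' b b' : T -> X) : homotopic a a' -> homotopic b b' ->
  homotopic (concat a b) (concat a' b').
Proof.
move=> e1 e2; have [H1 [hc1 hb1 h10 h11]] := hom_data e1.
have [H2 [hc2 hb2 h20 h21]] := hom_data e2.
apply: (mk_hom (H := fun t s => concat (fun u => H1 u s) (fun u => H2 u s) t)).
- exact: hcont_concat.
- exact: hbdry_concat.
- by move=> t ct; apply: concat_ext.
- by move=> t ct; apply: concat_ext.
Qed.

Lemma concat_const : concat (@const_loop _ x0 n) (@const_loop _ x0 n) = @const_loop _ x0 n :> (T -> X).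
Proof. by apply: funext => t; rewrite concatE; case: ifP. Qed.

Lemma rev_const : rev_loop (@const_loop _ x0 n) = @const_loop _ x0 n :> (T -> X).
Proof. by apply: funext => t; rewrite revE. Qed.

Lemma hom_rev (a a' : T -> X) : homotopic a a' -> homotopic (rev_loop a) (rev_loop a').
Proof.
move=> e1; have [H [hc hb h0 h1]] := hom_data e1.
apply: (mk_hom (H := fun t s => H (setc t i (-1 * t i + 1)) s)).
- apply: (hcont_comp (sig := fun _ s => s)) => //.
  + exact: ccont_setc (rcont_lin _ _ (rcont_coord i)).
  + exact: rcont_s.
  + move=> t s [ct us]; split => //; apply: cube_setc => //.
    by have /andP [u1 u2] := ct i; apply/andP; split; lra.
- move=> t s bt us; apply: hb => //; apply: bdry_setc => //.
  + by have /andP [u1 u2] := (bdry_cube bt) i; apply/andP; split; lra.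
  + by move=> ->; right; rewrite mulr0 add0r.
  + by move=> ->; left; rewrite mulN1r addNr.
- move=> t ct; rewrite revE h0; first by rewrite mulN1r addrC.
  by apply: cube_setc => //; have /andP [u1 u2] := ct i; apply/andP; split; lra.
- move=> t ct; rewrite revE h1; first by rewrite mulN1r addrC.
  by apply: cube_setc => //; have /andP [u1 u2] := ct i; apply/andP; split; lra.
Qed.

Lemma clamp_ge1 (x : RR) : 1 <= x -> clamp x = 1.
Proof. by move=> h; rewrite /clamp /Order.min /Order.max; repeat case: ifP => /=; lra. Qed.

Lemma hom_concat_const (a : T -> X) : is_loop d x0 a ->
  homotopic (concat a (@const_loop _ x0 n)) a.
Proof.
move=> la.
apply: (mk_hom (H := fun t s => a (setc t i (clamp ((-1 * s + 2) * t i))))).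
- apply: (hcont_comp (H := fun u _ => a u) (sig := fun _ s => s)).
  + exact: (loop_hcont la).
  + apply: ccont_setc; apply: rcont_clamp; apply: rcont_mul.
      exact: rcont_lin (@rcont_s _).
    exact: rcont_coord.
  + exact: rcont_s.
  + by move=> t s [ct us]; split => //; apply: cube_setc => //; apply: clamp_int.
- move=> t s bt /andP [s1 s2]; case: la => _ -> //.
  apply: bdry_setc => //; first exact: clamp_int.
  + by move=> ->; left; rewrite mulr0 clamp_id //; case: unit_int01.
  + by move=> ->; right; rewrite mulr1 clamp_ge1 //; lra.
- move=> t ct; rewrite concatE; have /andP [u1 u2] := ct i.
  rewrite mulr0 add0r; case: ifP => h.
    by rewrite clamp_id //; apply/andP; split; lra.
  move/negbT: h; rewrite -ltNge => h.
  rewrite clamp_ge1; last lra.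
  by case: la => _ -> //; apply: bdry_setc01 => //; right.
- move=> t ct; rewrite (_ : (-1 * 1 + 2) * t i = t i); last by ring.
  by rewrite clamp_id ?setc_id.

Qed.

End Concat.

Section PC.
Variables (X : Type) (d : X -> X -> RR) (x0 : X) (n : nat).
Hypothesis hm : is_metric d.
Local Notation T := ('I_n -> RR).
Local Notation hcont := (hcont d).
Local Notation homotopic := (homotopic d x0).
Local Notation hbdry := (hbdry x0).

Lemma dxx x : d x x = 0.
Proof. by case: hm => _ h _ _; apply/h. Qed.

Lemma cube_cdist (t : T) : cube t -> cdist t <= 2^-1.
Proof.
move=> ct; apply: cdist_le; first by rewrite invr_ge0 ler0n.
by move=> j; have /andP [u1 u2] := ct j; apply: absP; lra.
Qed.

Lemma bdry_cdist (t : T) : cube_bdry t -> cdist t = 2^-1.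
Proof.
move=> bt; apply/eqP; rewrite eq_le cube_cdist ?bdry_cube //=.
case: bt => ct [j hj]; apply: le_trans (cdist_ge j t).
case: hj => ->.
  rewrite sub0r normrN ger0_norm //; rewrite invr_ge0 ler0n //.
rewrite ger0_norm; lra.
exact: bdry_cube.
Qed.

Lemma cdist_eq (t : T) : cdist t = 4^-1 -> exists j, `|t j - 2^-1| = 4^-1.
Proof.
move=> E; apply: contrapT => N.
have : cdist t < 4^-1.
  apply: cdist_lt; first by rewrite invr_gt0 ltr0n.
  move=> j; rewrite lt_neqAle; apply/andP; split.
    by apply/eqP => h; apply: N; exists j.
  by rewrite -E; apply: cdist_ge.
by rewrite E ltxx.
Qed.

Lemma abs_eq (x c : RR) : `|x| = c -> x = c \/ x = - c.
Proof.
case: (lerP 0 x) => h; [rewrite ger0_norm // => ->; left | rewrite ltr0_norm // => <-; right].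
  by []. by rewrite opprK.
Qed.

Lemma loop_pathconj g f : is_path d g x0 (g 1) -> based_map d (g 1) f ->
  is_loop d x0 (pathconj g f : T -> X).
Proof.
move=> [pg [g0 _]] [cf bf].
have cl2 : forall x y : RR, `|clamp (2 * x - 2^-1) - clamp (2 * y - 2^-1)| <= 2 * `|x - y|.
  move=> x y; apply: le_trans (clamp_lip _ _) _.
  have -> : 2 * x - 2^-1 - (2 * y - 2^-1) = 2 * (x - y) by ring.
  by rewrite normrM ger0_norm.
split.
  apply: cube_cont_of.
  apply: (hcont_ext (G := fun t s => if cdist t <= 4^-1
    then f (fun j => clamp (2 * t j - 2^-1)) else g (clamp (-4 * cdist t + 2)))).
    move=> t s [ct _]; rewrite /pathconj; case: ifP => h.
      congr f; apply: funext => j; rewrite clamp_id //.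
      have := le_trans (cdist_ge j t) h => /ler_normlP [h1 h2].
      by apply/andP; split; lra.
    move/negbT: h; rewrite -ltNge => h; have := cube_cdist ct => h2.
    rewrite clamp_id; first by congr g; ring.
    by apply/andP; split; lra.
  apply: (hcont_paste (th := fun t _ => cdist t)).
  - apply: (hcont_comp (H := fun u _ => f u) (sig := fun _ s => s)).
    + exact: hcont_loop cf.
    + by apply: (ccont_pw (f := fun x => clamp (2 * x - 2^-1)) (K := 2)) => //; lra.
    + exact: rcont_s.
    + by move=> t s [ct us]; split => // j; apply: clamp_int.
  - apply: hcont_path => //; first exact: rcont_clamp (rcont_lin _ _ (@rcont_cdist _)).
    by move=> t s _; apply: clamp_int.
  - exact: rcont_cdist.
  move=> t s [ct _] E.
  rewrite E (_ : -4 * 4^-1 + 2 = 1 :> RR); last by field.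
  rewrite clamp_id; last by case: unit_int01.
  apply: bf; split; first by move=> j; apply: clamp_int.
  have [j hj] := cdist_eq E; exists j.
  by case: (abs_eq hj) => hj2; [right | left]; rewrite clamp_id;
    (try by apply/andP; split; lra); lra.
move=> t bt; rewrite /pathconj bdry_cdist //.
have -> : ((2 : RR)^-1 <= 4^-1) = false by apply/negbTE; rewrite -ltNge; lra.
by rewrite (_ : 2 - 4 * 2^-1 = 0 :> RR) //; field.
Qed.

Lemma hom_const_pathconj g : is_path d g x0 (g 1) ->
  homotopic (@const_loop _ x0 n) (pathconj g (fun _ => g 1)).
Proof.
move=> [pg [g0 _]].
apply: (mk_hom (H := fun t s => g (clamp (s * clamp (-4 * cdist t + 2))))).
- apply: hcont_path => //; last by move=> *; apply: clamp_int.
  apply: rcont_clamp; apply: rcont_mul; first exact: rcont_s.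
  exact: rcont_clamp (rcont_lin _ _ (@rcont_cdist _)).
- move=> t s bt _; rewrite bdry_cdist // (_ : -4 * 2^-1 + 2 = 0 :> RR); last by field.
  by rewrite !clamp_id ?mulr0 ?g0 //; case: unit_int01.
- by move=> t _; rewrite mul0r clamp_id ?g0 //; case: unit_int01.
- move=> t ct; rewrite mul1r (clamp_id (clamp_int _)) /pathconj; case: ifP => h.
    by rewrite clamp_ge1 //; lra.
  move/negbT: h; rewrite -ltNge => h; have := cube_cdist ct => h2.
  rewrite clamp_id; first by congr g; ring.
  by apply/andP; split; lra.
Qed.

Lemma pathconj_close g f (r : RR) : 0 <= r ->
  (forall u, cube u -> d (g 1) (f u) <= r) ->
  forall t : T, cube t -> d (pathconj g (fun _ => g 1) t) (pathconj g f t) <= r.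
Proof.
move=> hr hf t ct; rewrite /pathconj; case: ifP => h; last by rewrite dxx.
apply: hf => j; have := le_trans (cdist_ge j t) h => /ler_normlP [h1 h2].
by apply/andP; split; lra.
Qed.

Lemma hclass_eq (a b : T -> X) : homotopic a b -> hclass d x0 a = hclass d x0 b.
Proof.
move=> h; apply: funext => c; apply: propext; split => h'.
  exact: hom_trans (hom_sym h) h'.
exact: hom_trans h h'.
Qed.

Variables (i : 'I_n) (hi : first_coord n = Some i).

Lemma mulc_hclass (a b : T -> X) : is_loop d x0 a -> is_loop d x0 b ->
  mulc d x0 (hclass d x0 a) (hclass d x0 b) = hclass d x0 (concat a b).
Proof.
move=> la lb; apply: funext => c; apply: propext; split.
  by case=> a' [b' [ha hb hc]]; exact: hom_trans (hom_concat hi ha hb) hc.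
by move=> h; exists a, b; split => //; apply: hom_refl.
Qed.

Lemma invc_hclass (a : T -> X) : is_loop d x0 a ->
  invc d x0 (hclass d x0 a) = hclass d x0 (rev_loop a).
Proof.
move=> la; apply: funext => c; apply: propext; split.
  by case=> a' [ha hc]; exact: hom_trans (hom_rev hi ha) hc.
by move=> h; exists a; split => //; apply: hom_refl.
Qed.

End PC.

Definition hp (k : nat) : RR := ((2 : RR) ^+ k)^-1.

Lemma hp_gt0 k : 0 < hp k.
Proof. by rewrite /hp invr_gt0 exprn_gt0 // ltr0n. Qed.

Lemma hp_S k : hp k.+1 = hp k / 2.
Proof. by rewrite /hp exprS invfM mulrC. Qed.

Lemma hp_le j k : (j <= k)%N -> hp k <= hp j.
Proof.
move=> /subnK <-; elim: (k - j)%N => [|m IH]; first by rewrite add0n.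
rewrite addSn hp_S; have := hp_gt0 (m + j); lra.
Qed.

Lemma hp_small (e : RR) : 0 < e -> exists k, hp k < e.
Proof.
move=> he; have h0 : 0 <= e^-1 by rewrite invr_ge0 ltW.
set k := Num.Def.archi_bound (e^-1).
have hk := archi_boundP h0; exists k.
have h2 : (k%:R : RR) < 2 ^+ k.
  by rewrite -natrX ltr_nat; apply: ltn_expl.
have hk0 : 0 < (k%:R : RR) by apply: le_lt_trans hk.
rewrite /hp -(invrK e) ltf_pV2 ?posrE ?exprn_gt0 ?ltr0n ?invr_gt0 //.
exact: lt_trans hk h2.
Qed.

Section Stone.
Variables (X : Type) (d : X -> X -> RR) (x0 : X).
Hypothesis hm : is_metric d.
Variable r : RR.
Hypothesis hr : 0 < r.
Variable R : rel {classic X}.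
Hypothesis wR : well_order R.

Let d_tri x y z : d x z <= d x y + d y z.
Proof. by case: hm. Qed.
Let d_sym x y : d x y = d y x.
Proof. by case: hm. Qed.
Let d_ge0 x y : 0 <= d x y.
Proof. by case: hm. Qed.
Let dxx x : d x x = 0.
Proof. by case: hm => _ h _ _; apply/h. Qed.

Lemma R_refl (x : X) : R x x.
Proof.
have [z [[z1 z2] _]] := wR (A := pred1 (x : {classic X})) (ex_intro _ x (eqxx _)).
have := z2 x; rewrite inE => /(_ erefl).
by move: z1; rewrite inE => ->.
Qed.

Lemma R_anti (x y : X) : R x y -> R y x -> x = y.
Proof.
move=> h1 h2.
have hx : (x : {classic X}) \in pred2 (x : {classic X}) y by rewrite inE eqxx.
have [z [_ U]] := wR (A := pred2 (x : {classic X}) y) (ex_intro _ x hx).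
have mx : minimum_of R (pred2 (x : {classic X}) y) x.
  split; first by rewrite inE eqxx.
  by move=> w; rewrite inE => /orP [] /eqP ->; [exact: R_refl|].
have my : minimum_of R (pred2 (x : {classic X}) y) y.
  split; first by rewrite inE eqxx orbT.
  by move=> w; rewrite inE => /orP [] /eqP ->; [|exact: R_refl].
by rewrite -(U _ mx) (U _ my).
Qed.

Lemma R_total (x y : X) : R x y \/ R y x.
Proof.
have hx : (x : {classic X}) \in pred2 (x : {classic X}) y by rewrite inE eqxx.
have [z [[z1 z2] _]] := wR (A := pred2 (x : {classic X}) y) (ex_intro _ x hx).
move: z1; rewrite inE => /orP [] /eqP E; subst z.
  by left; apply: z2; rewrite inE eqxx orbT.
by right; apply: z2; rewrite inE eqxx.
Qed.

Definition ballp (x : X) : {pred {classic X}} := fun a => `[< d a x < r >].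

Lemma exmin x : exists z, minimum_of R (ballp x) z.
Proof.
have hx : (x : {classic X}) \in ballp x by rewrite /ballp unfold_in; apply/asboolP; rewrite dxx.
have [z [h _]] := wR (A := ballp x) (ex_intro _ x hx).
by exists z.
Qed.

Definition ix (x : X) : X := proj1_sig (cid (exmin x)).

Lemma ix_ball x : d (ix x) x < r.
Proof.
rewrite /ix; case: cid => z [h _] /=.
by move: h; rewrite /ballp unfold_in => /asboolP.
Qed.

Lemma ix_min x b : d b x < r -> R (ix x) b.
Proof.
rewrite /ix; case: cid => z [_ h] /= hb; apply: h.
by rewrite /ballp unfold_in; apply/asboolP.
Qed.

Definition Dn (C : set X) (k : nat) (a : X) : set X :=
  [set y | exists x, [/\ ix x = a, ~ C x, (forall z, d x z < 3 * hp k -> d a z < r)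
     & d x y < hp k]].

Fixpoint Cov (k : nat) : set X :=
  if k is k'.+1 then Cov k' `|` [set y | exists a, Dn (Cov k') k' a y] else set0.

Definition DD a k := Dn (Cov k) k a.

Lemma ball_open x (rho : RR) : d_open d [set y | d x y < rho].
Proof.
move=> y /= hy; exists (rho - d x y); first by lra.
move=> w hw /=; have := d_tri x y w; lra.
Qed.

Lemma DD_open a k : d_open d (DD a k).
Proof.
move=> y [x [h1 h2 h3 h4]]; exists (hp k - d x y); first by lra.
move=> w hw; exists x; split => //; have := d_tri x y w; lra.
Qed.

Lemma DD_small a k y : DD a k y -> d a y < r.
Proof.
move=> [x [_ _ h3 h4]]; apply: h3; have := hp_gt0 k; lra.
Qed.

Lemma Cov_DD k y : Cov k y -> exists a j, (j < k)%N /\ DD a j y.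
Proof.
elim: k => [//|k IH] /= [h|[a h]].
  by have [a' [j [hj h']]] := IH h; exists a', j; split => //; apply: ltnW.
by exists a, k.
Qed.

Lemma DD_Cov a j k : (j < k)%N -> DD a j `<=` Cov k.
Proof.
elim: k => [//|k IH] hjk y hy /=.
move: hjk; rewrite ltnS leq_eqVlt => /orP [/eqP E|hjk]; last by left; apply: IH.
by move: hy; rewrite E => hy; right; exists a.
Qed.

Lemma DD_cover x : exists a k, DD a k x.
Proof.
have h := ix_ball x.
have he : 0 < (r - d (ix x) x) / 3 by lra.
have [k hk] := hp_small he.
case: (pselect (Cov k x)) => hc.
  by have [a [j [_ h']]] := Cov_DD hc; exists a, j.
exists (ix x), k, x; split => //; last by rewrite dxx hp_gt0.
by move=> z hz; have := d_tri (ix x) x z; lra.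
Qed.

Lemma DD_sep (a b : X) i p q : a <> b -> DD a i p -> DD b i q -> hp i < d p q.
Proof.
move=> nab [y [ey ny bY py]] [z [ez nz bZ qz]].
case: (R_total a b) => Rab.
- have h1 : ~ d a z < r.
    move=> h; apply: nab; apply: R_anti => //; rewrite -ez; exact: ix_min.
  have h2 : ~ d y z < 3 * hp i by move=> h; apply: h1; apply: bY.
  have := d_tri y p z; have := d_tri p q z; rewrite (d_sym q z).
  move/negP: h2; rewrite -leNgt; lra.
- have h1 : ~ d b y < r.
    move=> h; apply: nab; apply: R_anti => //; rewrite -ey; exact: ix_min.
  have h2 : ~ d z y < 3 * hp i by move=> h; apply: h1; apply: bZ.
  have := d_tri z q y; have := d_tri q p y; rewrite (d_sym p y) (d_sym q p).
  move/negP: h2; rewrite -leNgt; lra.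
Qed.

Lemma DD_far a k x j : (forall w, d x w < hp j -> DD a k w) ->
  forall b i y, (k < i)%N -> DD b i y -> hp j <= d x y + hp i.
Proof.
move=> hb b i y hki [z [ez nz bz zy]].
have h1 : ~ d x z < hp j.
  by move=> h; apply: nz; apply: (DD_Cov hki); apply: hb.
have := d_tri x y z; rewrite (d_sym y z).
move/negP: h1; rewrite -leNgt; lra.
Qed.

Lemma DD_locfin x : exists2 W, d_open d W /\ W x &
  finite_set [set A | (exists a k, A = DD a k) /\ (A `&` W) !=set0].
Proof.
have [a [k hx]] := DD_cover x.
have [e he hball] := DD_open hx.
have [j hj] := hp_small he.
set m := (k + j).+1.
have hm1 : 2 * hp m = hp (k + j) by rewrite /m hp_S; field.
have hm2 : hp (k + j) <= hp j by apply: hp_le; apply: leq_addl.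
have hm3 : 0 < hp m := hp_gt0 m.
set W := [set y | d x y < hp m].
exists W; first by split; [exact: ball_open | rewrite /W /= dxx].
pose h (i : nat) : set X :=
  match pselect (exists b, (DD b i `&` W) !=set0) with
  | left e' => DD (proj1_sig (cid e')) i
  | right _ => set0 end.
apply: (sub_finite_set _ (finite_image h (finite_II m))).
move=> A [[b [i ->]] [y [hy Wy]]].
have him : (i < m)%N.
  rewrite ltnNge; apply/negP => hmi.
  have hki : (k < i)%N by apply: leq_trans hmi; rewrite /m ltnS leq_addr.
  have := DD_far (fun w hw => hball w (lt_trans hw hj)) hki hy.
  have := hp_le hmi; move: Wy; rewrite /W /=; lra.
exists i => //.
rewrite /h; case: pselect => [e'|N]; last by exfalso; apply: N; exists b, y.
case: cid => b' [y' [hy' Wy']] /=.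
case: (pselect (b' = b)) => [-> //|nb].
have hs := DD_sep nb hy' hy.
have hi : hp (k + j) <= hp i by apply: hp_le; rewrite -ltnS.
have w1 : d x y < hp m := Wy.
have w2 : d x y' < hp m := Wy'.
exfalso; have := d_tri y' x y; rewrite (d_sym y' x); lra.
Qed.

End Stone.


Lemma stone (X : Type) (d : X -> X -> RR) (x0 : X) : is_metric d ->
  forall r : RR, 0 < r -> exists U U0, cov d x0 U U0 /\
    (forall A, U A -> exists z, forall y, A y -> d z y < r).
Proof.
move=> hm r hr; have [R wR] := well_ordering_principle {classic X}.
pose U := [set A | exists a k, A = DD hm hr wR a k].
have [a [k hx0]] := DD_cover hm hr wR x0.
exists U, (DD hm hr wR a k); split; last first.
  by move=> A [b [j ->]]; exists b => y; apply: DD_small.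
split.
- by move=> A [b [j ->]]; apply: DD_open.
- by move=> x; have [b [j hx]] := DD_cover hm hr wR x; exists (DD hm hr wR b j) => //; exists b, j.
- exact: DD_locfin.
- by split => //; exists a, k.
Qed.

Section Final.
Variables (X : Type) (d : X -> X -> RR) (x0 : X) (n : nat).
Hypothesis hm : is_metric d.
Local Notation T := ('I_n -> RR).
Local Notation homotopic := (homotopic d x0).
Local Notation hclass := (hclass d x0).
Local Notation cl := (@const_loop _ x0 n).
Variables (i : 'I_n) (hi : first_coord n = Some i).

Lemma d_tri x y z : d x z <= d x y + d y z.
Proof. by case: hm. Qed.
Lemma d_sym x y : d x y = d y x.
Proof. by case: hm. Qed.
Lemma d_ge0 x y : 0 <= d x y.
Proof. by case: hm. Qed.

Lemma loop_const : is_loop d x0 cl.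
Proof.
split => // t ct e he; exists 1 => // t' _ _.
by rewrite /const_loop dxx.
Qed.

Lemma concat_pw (a1 a2 b1 b2 : T -> X) r :
  (forall u, cube u -> d (a1 u) (b1 u) <= r) ->
  (forall u, cube u -> d (a2 u) (b2 u) <= r) ->
  forall t, cube t -> d (concat a1 a2 t) (concat b1 b2 t) <= r.
Proof.
move=> h1 h2 t ct; rewrite !(concatE hi); have /andP [u1 u2] := ct i.
case: ifP => h.
  by apply: h1; apply: cube_setc => //; apply/andP; split; lra.
move/negbT: h; rewrite -ltNge => h.
by apply: h2; apply: cube_setc => //; apply/andP; split; lra.
Qed.

Lemma rev_pw (a1 b1 : T -> X) r :
  (forall u, cube u -> d (a1 u) (b1 u) <= r) ->
  forall t, cube t -> d (rev_loop a1 t) (rev_loop b1 t) <= r.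
Proof.
move=> h1 t ct; rewrite !(revE hi); apply: h1; apply: cube_setc => //.
by have /andP [u1 u2] := ct i; apply/andP; split; lra.
Qed.

Definition Sg (r : RR) : set (set (T -> X)) := fun s =>
  is_class d x0 s /\ exists a1 b1, [/\ homotopic cl a1, s b1 &
     forall t, cube t -> d (a1 t) (b1 t) <= r].

Lemma Sg_sub r : 0 <= r -> subgroup d x0 (Sg r).
Proof.
move=> hr; split.
- split; first by exists cl => //; apply: loop_const.
  exists cl, cl; split; try exact: hom_refl loop_const.
  by move=> t _; rewrite /const_loop dxx.
- move=> p q [[b lb ->] [a1 [b1 [h1 e1 p1]]]] [[b' lb' ->] [a2 [b2 [h2 e2 p2]]]].
  rewrite (mulc_hclass hi lb lb'); split; first by exists (concat b b'); first exact: (loop_concat hi).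
  exists (concat a1 a2), (concat b1 b2); split.
  + by rewrite -(concat_const _ hi); apply: (hom_concat hi).
  + exact: (hom_concat hi).
  + exact: concat_pw.
- move=> p [[b lb ->] [a1 [b1 [h1 e1 p1]]]].
  rewrite (invc_hclass hi lb); split.
    exists (rev_loop b) => //; by case: (hom_loops (hom_rev hi (hom_refl lb))).
  exists (rev_loop a1), (rev_loop b1); split.
  + by rewrite -(rev_const _ hi); apply: (hom_rev hi).
  + exact: (hom_rev hi).
  + exact: rev_pw.
Qed.

Lemma cube0 : cube (fun _ : 'I_n => (0 : RR)).
Proof. by move=> j; case: unit_int01. Qed.

Lemma gens_Sg U r : 0 <= r ->
  (forall A, U A -> exists z, forall y, A y -> d z y < r / 2) ->
  span_gens d x0 U `<=` Sg r.
Proof.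
move=> hr hU c [g [f [A [pg bf UA fA ->]]]].
have lp := loop_pathconj pg bf.
split; first by exists (pathconj g f).
exists (pathconj g (fun _ => g 1)), (pathconj g f); split.
- exact: (@hom_const_pathconj X d x0 n g pg).
- exact: hom_refl.
- apply: (pathconj_close hm) => // u cu.
  have [z hz] := hU A UA.
  have g1 : g 1 = f (fun _ => 0).
    by case: bf => _ ->; split; [exact: cube0 | exists i; left].
  have := hz _ (fA _ cu); have := hz _ (fA _ cube0); rewrite -g1.
  have := d_tri (g 1) z (f u); rewrite (d_sym (g 1) z); lra.
Qed.

Lemma mu_ge0 (a b : T -> X) : 0 <= mu d a b.
Proof.
rewrite /mu; set E := [set _ | _ in _].
case: (pselect (has_sup E)) => h; last by rewrite sup_out.
apply: le_trans (sup_upper_bound h (x := d (a (fun _ => 0)) (b (fun _ => 0))) _).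
  exact: d_ge0.
by exists (fun _ => 0) => //; exact: cube0.
Qed.

Lemma mu_le (a b : T -> X) r : (forall t, cube t -> d (a t) (b t) <= r) -> mu d a b <= r.
Proof.
move=> h; apply: ge_sup; first by exists (d (a (fun _ => 0)) (b (fun _ => 0))), (fun _ => 0) => //; exact: cube0.
by move=> _ [t ct <-]; apply: h.
Qed.

Lemma rho_le (p q : set (T -> X)) a b : p a -> q b -> rho d p q <= mu d a b.
Proof.
move=> pa qb; apply: ge_inf; last by exists a => //; exists b.
by exists 0 => _ [a' _ [b' _ <-]]; apply: mu_ge0.
Qed.

End Final.

Lemma fc_some (n : nat) : (1 <= n)%N -> exists i : 'I_n, first_coord n = Some i.
Proof.
move=> hn; rewrite /first_coord; case: pickP => [i _|h]; first by exists i.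
by move: (h (Ordinal hn)); rewrite /= eqxx.
Qed.

Theorem corollary5p12 (X : Type) (d : X -> X -> RR) (x0 : X) (n : nat) :
  is_metric d -> path_connected d -> (1 <= n)%N ->
  forall O : set (set (('I_n -> RR) -> X)),
    O `<=` is_class d x0 (n:=n) ->
    rho_open d x0 O -> spanier_open d x0 O.
Proof.
move=> hm hpc hn O hO hrho c Oc.
have [i hi] := fc_some hn.
have [a la Ec] := hO c Oc.
have [e he H] := hrho c Oc.
have hr : 0 < e / 4 by lra.
have [U [U0 [cU hU]]] := stone x0 hm hr.
have hU' : forall A, U A -> exists z, forall y, A y -> d z y < (e / 2) / 2.
  move=> A UA; have [z hz] := hU A UA; exists z => y Ay.
  by have := hz y Ay; lra.
have he2 : 0 <= e / 2 by lra.
have SS : forall s, Span d x0 U s -> @Sg X d x0 n (e / 2) s.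
  move=> s Ss; apply: (Ss (@Sg X d x0 n (e/2))).
    exact: (gens_Sg hm i he2 hU').
  have HH := (@Sg_sub X d x0 n hm i hi (e/2) he2); exact HH.
exists U, U0, c; split => //.
- by exists a.
- exists (onec d x0 (n:=n)).
    by move=> S _ [S1 _ _].
  rewrite Ec /onec (mulc_hclass hi la (@loop_const X d x0 n hm)).
  by rewrite (hclass_eq (hom_concat_const hi la)).
- move=> c' [s Ss ->].
  have [[b lb Eb] [a1 [b1 [h1 e1 p1]]]] := SS s Ss.
  apply: H.
    by rewrite Ec Eb (mulc_hclass hi la lb); exists (concat a b) => //; exact: (loop_concat hi).
  rewrite Ec Eb (mulc_hclass hi la lb).
  apply: le_lt_trans (rho_le hm (a := concat a a1) (b := concat a b1) _ _) _.
  + exact: hom_trans (hom_sym (hom_concat_const hi la)) (hom_concat hi (hom_refl la) h1).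
  + move: e1; rewrite Eb /hclass => e1; exact: (hom_concat hi (hom_refl la) e1).
  + apply: le_lt_trans (mu_le (r := e / 2) _) _; last by lra.
    apply: (concat_pw hi) => // u cu.
    by rewrite (dxx hm).
Qed.
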